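(* Let $n\ge2$ be even and $Q(x)=\sum_{i=1}^{n/2-1}Tr_1^n(x^{2^i+1})+Tr_1^{n/2}(x^{2^{n/2}+1})$ on $\mathbb{F}_{2^n}$. Then $Q$ is bent but not negabent.
   Context: $Tr_1^m(z)=z+z^2+\dots+z^{2^{m-1}}$; $Tr=Tr_1^n$. Fix a self-dual basis $\{\alpha_i\}$ of $\mathbb{F}_{2^n}$ over $\mathbb{F}_2$ ($Tr(\alpha_i\alpha_j)=\delta_{ij}$), identify $\mathbb{F}_{2^n}$ with $\mathbb{F}_2^n$ via coordinates, and let $wt(x)$ be the number of nonzero coordinates. For $g:\mathbb{F}_{2^n}\to\mathbb{F}_2$: $g$ is bent if $\left|\sum_x(-1)^{g(x)+Tr(\mu x)}\right|=2^{n/2}$ for all $\mu$; negabent if $\left|\sum_x(-1)^{g(x)+Tr(\mu x)}\mathrm{i}^{wt(x)}\right|=2^{n/2}$ for all $\mu$ ($\mathrm{i}=\sqrt{-1}$). *)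

(* Defs.v *)
From HB Require Import structures.
From mathcomp Require Import all_boot all_order all_algebra all_field.
Set Implicit Arguments. Unset Strict Implicit. Unset Printing Implicit Defensive.
Import Order.TTheory GRing.Theory Num.Theory.
Local Open Scope ring_scope.

Section Defs.
Variable F : finFieldType.

Definition Trm (m : nat) (z : F) : F := \sum_(i < m) z ^+ (2 ^ i).

Definition Qfun (n : nat) (x : F) : F :=
  \sum_(1 <= i < n./2) Trm n (x ^+ (2 ^ i + 1))
  + Trm n./2 (x ^+ (2 ^ n./2 + 1)).

Definition self_dual (n : nat) (alpha : 'I_n -> F) : Prop :=
  forall i j : 'I_n, Trm n (alpha i * alpha j) = (i == j)%:R.

Definition coords (n : nat) (alpha : 'I_n -> F) (x : F) : {ffun 'I_n -> bool} :=
  odflt [ffun => false]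
    [pick c : {ffun 'I_n -> bool} | x == \sum_(i < n) (c i)%:R * alpha i].

Definition wt (n : nat) (alpha : 'I_n -> F) (x : F) : nat :=
  #|[set i | coords alpha x i]|.

Definition sgn (b : F) : algC := if b == 0 then 1 else -1.

(* g : F -> F_2 is represented as a map F -> F with values in {0,1} *)
Definition is_bent (n : nat) (g : F -> F) : Prop :=
  forall mu : F,
    `| \sum_(x : F) sgn (g x + Trm n (mu * x)) | = (2 ^ n./2)%:R.

Definition is_negabent (n : nat) (alpha : 'I_n -> F) (g : F -> F) : Prop :=
  forall mu : F,
    `| \sum_(x : F) sgn (g x + Trm n (mu * x)) * 'i ^+ (wt alpha x) |
      = (2 ^ n./2)%:R.

End Defs.

(* Main.v *)
Require Import Defs.
From mathcomp Require Import all_boot all_order all_algebra all_field.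
From mathcomp Require Import zify ring.
Import GRing.Theory Num.Theory.
Local Open Scope ring_scope.

Section Proof.
Variable F : finFieldType.
Variable n : nat.
Hypothesis ch : 2%N \in [pchar F].
Hypothesis cardF : #|F| = (2 ^ n)%N.

Local Notation Tr := (@Trm F n).
Definition bit (t : F) := (t == 0) || (t == 1).

Lemma add2 (x : F) : x + x = 0. Proof. exact: addrr_pchar2. Qed.

Lemma sqrD (x y : F) : (x + y) ^+ 2 = x ^+ 2 + y ^+ 2.
Proof. by rewrite sqrrD mulr2n add2 addr0. Qed.

Lemma exp2D k (x y : F) : (x + y) ^+ (2 ^ k) = x ^+ (2 ^ k) + y ^+ (2 ^ k).
Proof.
elim: k x y => [|k IH] x y; first by rewrite !expr1.
by rewrite expnS !exprM sqrD IH.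
Qed.

Lemma exp2_0 k : (0 : F) ^+ (2 ^ k) = 0.
Proof. by rewrite expr0n expn_eq0. Qed.

Lemma exp2_sum k (I : finType) (f : I -> F) :
  (\sum_i f i) ^+ (2 ^ k) = \sum_i (f i) ^+ (2 ^ k).
Proof.
exact: (big_morph (fun x => x ^+ (2 ^ k)) (exp2D k) (exp2_0 k)).
Qed.

Lemma frobn (x : F) : x ^+ (2 ^ n) = x.
Proof. by rewrite -cardF expf_card. Qed.

Lemma TrmD m (x y : F) : Trm m (x + y) = Trm m x + Trm m y.
Proof. by rewrite /Trm -big_split; apply: eq_bigr => i _; rewrite exp2D. Qed.

Lemma Trm0 m : Trm m (0 : F) = 0.
Proof. by rewrite /Trm big1 // => i _; rewrite exp2_0. Qed.

Lemma Trm_sum m (I : finType) (f : I -> F) :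
  Trm m (\sum_i f i) = \sum_i Trm m (f i).
Proof. exact: (big_morph (Trm m) (TrmD m) (Trm0 m)). Qed.

Lemma Trm_sq m (y : F) : Trm m (y ^+ 2) = (Trm m y) ^+ 2.
Proof.
rewrite /Trm (exp2_sum 1); apply: eq_bigr => i _.
by rewrite expn1 exprAC.
Qed.

Lemma Trm_fix m (y : F) : y ^+ (2 ^ m) = y -> (Trm m y) ^+ 2 = Trm m y.
Proof.
move=> hy; rewrite /Trm (exp2_sum 1) expn1.
have e : \sum_(i < m.+1) y ^+ (2 ^ i) = \sum_(i < m.+1) y ^+ (2 ^ i) by [].
move: e; rewrite {1}big_ord_recl big_ord_recr /= expn0 expr1 hy [_ + y]addrC.
move/addrI => <-; apply: eq_bigr => i _.
by rewrite -exprM expnSr.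
Qed.

Lemma sq_bit (t : F) : t ^+ 2 = t -> bit t.
Proof.
move=> h; have : t * (t - 1) == 0 by rewrite mulrBr mulr1 -expr2 h subrr.
by rewrite mulf_eq0 subr_eq0 /bit.
Qed.

Lemma Tr_sq (z : F) : Tr (z ^+ 2) = Tr z.
Proof. by rewrite Trm_sq Trm_fix // frobn. Qed.

Lemma Tr_bit (z : F) : bit (Tr z).
Proof. by apply: sq_bit; rewrite Trm_fix // frobn. Qed.

Lemma Tr_exp2 k (z : F) : Tr (z ^+ (2 ^ k)) = Tr z.
Proof.
elim: k => [|k IH]; first by rewrite expr1.
by rewrite expnSr exprM Tr_sq IH.
Qed.

Lemma Tr_scal (c z : F) : bit c -> Tr (c * z) = c * Tr z.
Proof.
by case/orP => /eqP ->; rewrite ?mul0r ?Trm0 ?mul1r.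
Qed.

Lemma Tr_shift k (u v : F) : (k <= n)%N ->
  Tr (u ^+ (2 ^ k) * v) = Tr (u * v ^+ (2 ^ (n - k))).
Proof.
move=> hk; rewrite -(Tr_exp2 k (u * v ^+ _)) exprMn -exprM -expnD subnK //.
by rewrite frobn.
Qed.


Hypothesis hev : ~~ odd n.
Local Notation m := n./2.
Lemma hn : n = (m + m)%N.
Proof. by rewrite -{1}(odd_double_half n) (negbTE hev) add0n addnn. Qed.

Lemma halfT (z : F) : Trm m z + Trm m (z ^+ (2 ^ m)) = Tr z.
Proof.
rewrite /Trm; rewrite [in RHS]hn big_split_ord /=; congr (_ + _).
by apply: eq_bigr => i _; rewrite -exprM -expnD.
Qed.

Lemma powD k (x a : F) : (x + a) ^+ (2 ^ k + 1) =
  x ^+ (2 ^ k + 1) + a ^+ (2 ^ k + 1) + (x ^+ (2 ^ k) * a + a ^+ (2 ^ k) * x).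
Proof.
rewrite !addn1 !exprSr exp2D.
set X := x ^+ _; set A := a ^+ _.
ring.
Qed.

Hypothesis hn2 : (2 <= n)%N.

Lemma rev_part (a : F) :
  \sum_(1 <= i < m) a ^+ (2 ^ (n - i)) = \sum_(m.+1 <= i < n) a ^+ (2 ^ i).
Proof.
rewrite big_nat_rev -(add1n m) big_addn.
have -> : (n - m = m)%N by rewrite {1}hn addnK.
apply: eq_big_nat => i hi; congr (a ^+ (2 ^ _)); move: hi; rewrite hn; lia.
Qed.

Lemma S_eq (a : F) :
  \sum_(1 <= i < m) (a ^+ (2 ^ (n - i)) + a ^+ (2 ^ i)) + a ^+ (2 ^ m) = Tr a + a.
Proof.
have hm : (1 <= m)%N by move: hn2; rewrite hn; lia.
have hmn : (m < n)%N by move: hn2; rewrite hn; lia.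
rewrite /Trm -(big_mkord xpredT (fun i => a ^+ (2 ^ i))) big_ltn; last by lia.
rewrite expn0 expr1 (addrC a) -addrA add2 addr0.
rewrite [in RHS](@big_cat_nat _ _ _ m) //=; last exact: ltnW.
rewrite [in RHS](@big_ltn _ _ _ m) // big_split /= rev_part.
set A := \sum_(m.+1 <= i < n) _; set B := \sum_(1 <= i < m) _; ring.
Qed.

Lemma Trm_big (I : Type) (r : seq I) (P : pred I) (f : I -> F) k :
  Trm k (\sum_(i <- r | P i) f i) = \sum_(i <- r | P i) Trm k (f i).
Proof. exact: (big_morph (Trm k) (TrmD k) (Trm0 k)). Qed.

Lemma Q_polar (x a : F) :
  Qfun n (x + a) = Qfun n x + Qfun n a + Tr (x * (Tr a + a)).
Proof.
have e1 : \sum_(1 <= i < m) Tr ((x + a) ^+ (2 ^ i + 1)) =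
   \sum_(1 <= i < m) Tr (x ^+ (2 ^ i + 1)) + \sum_(1 <= i < m) Tr (a ^+ (2 ^ i + 1))
   + \sum_(1 <= i < m) (Tr (x * a ^+ (2 ^ (n - i))) + Tr (x * a ^+ (2 ^ i))).
  rewrite -!big_split; apply: eq_big_nat => i hi /=.
  rewrite powD !TrmD Tr_shift; last by move: hi; rewrite hn; lia.
  by rewrite (mulrC (a ^+ _)).
have e2 : Trm m ((x + a) ^+ (2 ^ m + 1)) =
   Trm m (x ^+ (2 ^ m + 1)) + Trm m (a ^+ (2 ^ m + 1)) + Tr (x * a ^+ (2 ^ m)).
  rewrite powD !TrmD; congr (_ + _).
  set z := a ^+ (2 ^ m) * x.
  have -> : x ^+ (2 ^ m) * a = z ^+ (2 ^ m).
    by rewrite /z exprMn -exprM -expnD -hn frobn mulrC.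
  by rewrite addrC halfT mulrC.
have e3 : Tr (\sum_(1 <= i < m) x * (a ^+ (2 ^ (n - i)) + a ^+ (2 ^ i))) =
    \sum_(1 <= i < m) (Tr (x * a ^+ (2 ^ (n - i))) + Tr (x * a ^+ (2 ^ i))).
  by rewrite Trm_big; apply: eq_bigr => i _; rewrite (@mulrDr F) TrmD.
rewrite /Qfun e1 e2 -S_eq (@mulrDr F x) (@mulr_sumr F) TrmD e3.
set s1 := \sum_(1 <= i < m) Tr (x ^+ _); set s2 := \sum_(1 <= i < m) Tr (a ^+ _).
set s3 := \sum_(1 <= i < m) _.
set t1 := Trm m _; set t2 := Trm m _.
ring.
Qed.


Lemma bitD (a b : F) : bit a -> bit b -> bit (a + b).
Proof.
by case/orP => /eqP -> /orP [] /eqP ->; rewrite /bit ?addr0 ?add0r ?add2 ?eqxx ?orbT.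
Qed.

Lemma bit1 : bit 1. Proof. by rewrite /bit eqxx orbT. Qed.
Lemma bit0 : bit 0. Proof. by rewrite /bit eqxx. Qed.

Lemma Trm_bit_fix k (y : F) : y ^+ (2 ^ k) = y -> bit (Trm k y).
Proof. by move=> h; apply: sq_bit; rewrite Trm_fix. Qed.

Lemma Q_bit (x : F) : bit (Qfun n x).
Proof.
rewrite /Qfun; apply: bitD.
  apply: (big_ind bit) => //; [by rewrite /bit eqxx | exact: bitD | by move=> i _; exact: Tr_bit].
apply: Trm_bit_fix.
rewrite -exprM mulnDl mul1n -expnD -hn exprD frobn.
by rewrite addn1 exprS.
Qed.

Lemma Q0 : Qfun n (0 : F) = 0.
Proof.
rewrite /Qfun big1; last by move=> i _; rewrite (@expr0n F) addn1 /= Trm0.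
by rewrite (@expr0n F) addn1 /= Trm0 add0r.
Qed.

Lemma Tr_cross (x a : F) : Tr (x * (Tr a + a)) = Tr a * Tr x + Tr (x * a).
Proof. by rewrite (@mulrDr F) TrmD [x * Tr a]mulrC (Tr_scal (Tr a)) ?Tr_bit. Qed.

Lemma Tr1 : Tr 1 = 0.
Proof.
rewrite /Trm (eq_bigr (fun _ => 1)); last by move=> i _; rewrite expr1n.
by rewrite sumr_const card_ord {1}hn mulrnDr add2.
Qed.

Lemma Tr_add_neq0 (a : F) : a != 0 -> Tr a + a != 0.
Proof.
move=> a0; apply/negP => /eqP h.
have ha : a = Tr a by rewrite -(oppr_pchar2 ch (Trm n a)); apply/eqP; rewrite -addr_eq0 addrC h.
case/orP: (Tr_bit a); rewrite -ha => /eqP h1; first by rewrite h1 eqxx in a0.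
by move: ha; rewrite h1 Tr1 => /eqP; rewrite oner_eq0.
Qed.


Lemma sgnD (a b : F) : bit a -> bit b -> sgn (a + b) = sgn a * sgn b.
Proof.
rewrite /sgn; case/orP => /eqP -> /orP [] /eqP ->;
  rewrite ?addr0 ?add0r ?add2 ?eqxx ?oner_eq0 ?mul1r ?mulr1 //.
by rewrite mulrNN mulr1.
Qed.

Arguments sgnD {a b}.
Arguments bitD {a b}.

Lemma sgn_sq (a : F) : sgn a * sgn a = 1.
Proof. by rewrite /sgn; case: ifP => _; rewrite ?mulr1 ?mulrNN ?mulr1. Qed.

Lemma sgn0 : sgn (0 : F) = 1.
Proof. by rewrite /sgn eqxx. Qed.

Lemma sgn_real (a : F) : sgn a \is Num.real.
Proof. by rewrite /sgn; case: ifP => _; rewrite ?realN real1. Qed.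

Variable z1 : F.
Hypothesis hz1 : Tr z1 = 1.

Lemma charsum (c : F) : c != 0 -> \sum_x sgn (Tr (c * x)) = 0 :> algC.
Proof.
move=> c0; set S := \sum_x _.
have E : S = - S.
  rewrite {1}/S (reindex_inj (addIr (c^-1 * z1))) /= -sumrN.
  apply: eq_bigr => x _.
  rewrite (@mulrDr F) mulVKf // TrmD hz1 sgnD ?Tr_bit ?bit1 //.
  by rewrite /sgn oner_eq0 mulrN1.
have : S *+ 2 = 0 by rewrite mulr2n {1}E addNr.
by move/eqP; rewrite mulrn_eq0 /= => /eqP.
Qed.

Lemma sum_const_one : \sum_(x : F) (1 : algC) = (2 ^ n)%:R.
Proof. by rewrite sumr_const cardF. Qed.

Lemma bent_part : is_bent n (@Qfun F n).
Proof.
move=> mu; set f := fun x => Qfun n x + Tr (mu * x).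
have fbit x : bit (f x) by apply: bitD; [exact: Q_bit | exact: Tr_bit].
have fD x a : f (x + a) = f x + (f a + Tr ((Tr a + a) * x)).
  rewrite /f Q_polar (@mulrDr F mu) TrmD [(Tr a + a) * x]mulrC.
  set u := Qfun n x; set v := Qfun n a; set w := Tr (x * _); set p := Tr (mu * x); set q := Tr (mu * a).
  ring.
set W := \sum_x sgn (f x).
have W2 : W ^+ 2 = (2 ^ n)%:R.
  rewrite expr2 {1}/W mulr_suml.
  transitivity (\sum_x \sum_a sgn (f a) * sgn (Tr ((Tr a + a) * x))).
    apply: eq_bigr => x _; rewrite /W mulr_sumr (reindex_inj (addrI x)) /=.
    apply: eq_bigr => a _; rewrite fD (sgnD (fbit x) (bitD (fbit a) (Tr_bit _))).
    by rewrite mulrA sgn_sq mul1r (sgnD (fbit a) (Tr_bit _)).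
  rewrite exchange_big /= (bigD1 (0:F)) //= [X in _ + X]big1; last first.
    by move=> a a0; rewrite -mulr_sumr charsum ?mulr0 // Tr_add_neq0.
  rewrite addr0 -mulr_sumr /f Q0 (@mulr0 F) Trm0 (@add0r F) sgn0 mul1r -sum_const_one.
  by apply: eq_bigr => x _; rewrite (@mul0r F) Trm0 sgn0.
have Wr : W \is Num.real by apply: rpred_sum => x _; exact: sgn_real.
apply/eqP; rewrite -(@eqrXn2 _ 2) ?normr_ge0 ?ler0n //.
by rewrite real_normK // W2 -natrX -expnM muln2 -addnn -hn.
Qed.


Variable alpha : 'I_n -> F.
Hypothesis hsd : self_dual alpha.

Definition t i x := Tr (alpha i * x) == 1.

Lemma bit_nat (c : F) : bit c -> c = (c == 1)%:R.
Proof. by case/orP => /eqP ->; rewrite ?eqxx // eq_sym oner_eq0. Qed.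

Lemma tb i x : Tr (alpha i * x) = (t i x)%:R.
Proof. exact: bit_nat (Tr_bit _). Qed.

Lemma natb_inj (b1 b2 : bool) : (b1%:R : F) = b2%:R -> b1 = b2.
Proof. by case: b1; case: b2 => //= /eqP; rewrite ?oner_eq0 // eq_sym oner_eq0. Qed.

Definition phi (c : {ffun 'I_n -> bool}) : F := \sum_(i < n) (c i)%:R * alpha i.

Lemma coef_phi c j : Tr (alpha j * phi c) = (c j)%:R.
Proof.
rewrite /phi (@mulr_sumr F) Trm_sum (bigD1 j) //= big1 ?addr0.
  rewrite (mulrCA (alpha j)) Tr_scal ?hsd ?eqxx ?mulr1 //.
  by case: (c j); rewrite /bit eqxx ?orbT.
move=> i ij; rewrite (mulrCA (alpha j)) Tr_scal; last by case: (c i); rewrite /bit eqxx ?orbT.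
by rewrite hsd eq_sym (negbTE ij) mulr0.
Qed.

Lemma phi_inj : injective phi.
Proof.
move=> c d h; apply/ffunP => j; apply: natb_inj.
by rewrite -!coef_phi h.
Qed.

Definition tv x : {ffun 'I_n -> bool} := [ffun i => t i x].

Lemma rep x : x = phi (tv x).
Proof.
have : x \in codom phi.
  apply: inj_card_onto; first exact: phi_inj.
  by rewrite card_ffun card_bool card_ord cardF.
case/codomP => c ->; congr phi; apply/ffunP => i.
by rewrite ffunE /t coef_phi; case: (c i); rewrite ?eqxx // eq_sym oner_eq0.
Qed.

Lemma coordsE x : coords alpha x = tv x.
Proof.
rewrite /coords; case: pickP => [c /eqP hc | none] /=.
  by apply: phi_inj; rewrite -rep.
by have := none (tv x); rewrite /= -/(phi (tv x)) -rep eqxx.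
Qed.

Lemma wtE x : wt alpha x = (\sum_(i < n) t i x)%N.
Proof.
rewrite /wt coordsE -sum1_card big_mkcond /=; apply: eq_bigr => i _.
by rewrite inE ffunE; case: (t i x).
Qed.

Lemma tD i x y : t i (x + y) = t i x (+) t i y.
Proof.
rewrite {1}/t (@mulrDr F) TrmD !tb.
case: (t i x); case: (t i y) => /=; rewrite ?add0r ?addr0 ?add2 ?eqxx //.
all: by rewrite eq_sym oner_eq0.
Qed.

Lemma Tr_mul x y : Tr (x * y) = (\sum_(i < n) (t i x && t i y))%:R.
Proof.
rewrite {1}(rep x) /phi (@mulr_suml F) Trm_sum natr_sum; apply: eq_bigr => i _.
rewrite -mulrA Tr_scal ?tb ?ffunE; last by case: (t i x); rewrite /bit eqxx ?orbT.
by case: (t i x); case: (t i y); rewrite ?mul1r ?mul0r.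
Qed.

Lemma natF k : (k%:R : F) = (odd k)%:R.
Proof.
rewrite -{1}(odd_double_half k) natrD -muln2 natrM (pcharf0 ch) mulr0 addr0.
by case: (odd k).
Qed.

Lemma sgn_nat k : sgn (k%:R : F) = (-1) ^+ k.
Proof.
rewrite natF -signr_odd /sgn; case: (odd k) => /=; rewrite ?eqxx ?expr0 //.
by rewrite oner_eq0 expr1.
Qed.

Lemma wtD x y : 'i ^+ (wt alpha (x + y)) * sgn (Tr (x * y)) = 'i ^+ (wt alpha x) * 'i ^+ (wt alpha y) :> algC.
Proof.
set k := (\sum_(i < n) (t i x && t i y))%N.
have e : (wt alpha x + wt alpha y = wt alpha (x + y)%R + k * 2)%N.
  rewrite !wtE -!big_split big_distrl /= -big_split /=; apply: eq_bigr => i _.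
  by rewrite tD; case: (t i x); case: (t i y).
by rewrite Tr_mul sgn_nat -exprD e exprD exprM exprAC sqrCi.
Qed.


Definition G x : algC := sgn (Qfun n x) * 'i ^+ (wt alpha x).
Definition e x : algC := if Tr x == 0 then 1 else 'i.
Definition e' x : algC := if Tr x == 0 then 1 else - 'i.
Definition H x := G x * e' x.

Lemma ee' x : e x * e' x = 1.
Proof.
rewrite /e /e'; case: ifP => _; rewrite ?mulr1 //.
by rewrite mulrN -expr2 sqrCi opprK.
Qed.

Lemma e'D x y : e' (x + y) = e' x * e' y * sgn (Tr x * Tr y).
Proof.
rewrite /e' TrmD.
case/orP: (Tr_bit x) => /eqP ->; case/orP: (Tr_bit y) => /eqP ->;
  rewrite ?addr0 ?add0r ?add2 ?mul0r ?mulr0 ?mul1r ?eqxx ?oner_eq0 ?sgn0 ?mulr1 ?mul1r //.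
by rewrite /sgn oner_eq0 mulrNN -expr2 sqrCi mulrNN mulr1.
Qed.

Lemma GD x y : G (x + y) = G x * G y * sgn (Tr y * Tr x).
Proof.
rewrite /G Q_polar Tr_cross.
have b1 := Q_bit x; have b2 := Q_bit y.
have b3 : bit (Tr y * Tr x).
  by case/orP: (Tr_bit y) => /eqP ->; rewrite ?mul0r ?mul1r ?bit0 ?Tr_bit.
have b4 := Tr_bit (x * y).
rewrite (sgnD (bitD b1 b2) (bitD b3 b4)) (sgnD b1 b2) (sgnD b3 b4).
have hw := wtD x y.
move: hw; set a1 := sgn (Qfun n x); set a2 := sgn (Qfun n y); set a3 := sgn (_ * _); set a4 := sgn (Tr (x * y)).
set w := 'i ^+ wt alpha (x + y); set wx := 'i ^+ wt alpha x; set wy := 'i ^+ wt alpha y => hw.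
transitivity (a1 * a2 * a3 * (w * a4)); first by ring.
rewrite hw; ring.
Qed.

Lemma HD x y : H (x + y) = H x * H y.
Proof.
rewrite /H GD e'D mulrC.
transitivity (H x * H y * (sgn (Tr x * Tr y) * sgn (Tr x * Tr y))); last first.
  by rewrite sgn_sq mulr1.
rewrite /H (mulrC (Tr y)).
set a := sgn _; set g1 := G x; set g2 := G y; set f1 := e' x; set f2 := e' y.
ring.
Qed.

Lemma wt0 : wt alpha 0 = 0%N.
Proof.
rewrite wtE big1 // => i _.
by rewrite /t (@mulr0 F) Trm0 eq_sym oner_eq0.
Qed.

Lemma H0 : H 0 = 1.
Proof. by rewrite /H /G /e' Q0 wt0 Trm0 eqxx sgn0 !mulr1. Qed.

Definition chi mu x := H x * sgn (Tr (mu * x)).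

Lemma chiD mu x y : chi mu (x + y) = chi mu x * chi mu y.
Proof.
rewrite /chi HD (@mulrDr F) TrmD sgnD ?Tr_bit //.
set a := H x; set b := H y; set c := sgn _; set d := sgn _; ring.
Qed.

Lemma sum_chi : \sum_mu \sum_x chi mu x = (2 ^ n)%:R.
Proof.
rewrite exchange_big /= (bigD1 (0:F)) //= [X in _ + X]big1; last first.
  move=> x x0; rewrite /chi -mulr_sumr.
  rewrite (eq_bigr (fun mu => sgn (Tr (x * mu)))) ?charsum ?mulr0 // => mu _.
  by rewrite mulrC.
rewrite addr0 /chi -mulr_sumr H0 mul1r -sum_const_one.
by apply: eq_bigr => mu _; rewrite (@mulr0 F) Trm0 sgn0.
Qed.

Lemma exists_mu : exists mu, forall x, chi mu x = 1.
Proof.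
have [mu hmu] : exists mu, \sum_x chi mu x != 0.
  case: (boolP [exists mu, \sum_x chi mu x != 0]) => [/existsP // | /existsPn h].
  have : \sum_mu \sum_x chi mu x = 0.
    by apply: big1 => mu _; have := h mu; rewrite negbK => /eqP.
  by rewrite sum_chi => /eqP; rewrite pnatr_eq0 expn_eq0.
exists mu => x0; apply/eqP/negPn/negP => hx0.
move: hmu; set S := \sum_x chi mu x.
have E : S = chi mu x0 * S.
  rewrite {1}/S (reindex_inj (addIr x0)) /= mulr_sumr.
  by apply: eq_bigr => x _; rewrite chiD mulrC.
have : S * (1 - chi mu x0) == 0 by rewrite mulrBr mulr1 {1}E [chi mu x0 * S]mulrC subrr.
by rewrite mulf_eq0 subr_eq0 [1 == _]eq_sym (negbTE hx0) orbF => ->.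
Qed.

Lemma sum_e : \sum_x e x = (2 ^ n)%:R * ((1 + 'i) / 2).
Proof.
transitivity (\sum_x ((1 + 'i) / 2 + (1 - 'i) / 2 * sgn (Tr (1 * x)))).
  apply: eq_bigr => x _; rewrite mul1r /e /sgn.
  by case: ifP => _; field.

have cs : \sum_x (1 - 'i) / 2 * sgn (Tr (1 * x)) = 0 :> algC.
  by rewrite -(@mulr_sumr algC) charsum ?oner_eq0 ?mulr0.
rewrite (@big_split algC) /= cs addr0.
by rewrite sumr_const cardF mulr_natl.
Qed.

Lemma not_negabent : ~ is_negabent alpha (@Qfun F n).
Proof.
move=> hneg; have [mu hmu] := exists_mu.
have := hneg mu.
have -> : \sum_x sgn (Qfun n x + Tr (mu * x)) * 'i ^+ (wt alpha x) = \sum_x e x.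
  apply: eq_bigr => x _.
  rewrite (sgnD (Q_bit x) (Tr_bit _)).
  have := hmu x; rewrite /chi /H => h.
  transitivity (G x * sgn (Tr (mu * x)) * (e x * e' x)); first by rewrite ee' mulr1 /G [RHS]mulrAC.
  transitivity (e x * (G x * e' x * sgn (Tr (mu * x)))); first by ring.
  by rewrite h mulr1.
rewrite sum_e => h.
have n1i : `|1 + 'i : algC| ^+ 2 = 2.
  rewrite normCK rmorphD /= rmorph1 conjCi.
  transitivity (1 - 'i ^+ 2 : algC); first by ring.
  by rewrite sqrCi opprK.
set N : algC := (2 ^ n)%:R.
have hN : N ^+ 2 * 2 = N * 4.
  have h2 : (`|N * ((1 + 'i) / 2)|) ^+ 2 = ((2 ^ m)%:R) ^+ 2 by rewrite h.
  move: h2; rewrite normrM normr_nat normrM normfV normr_nat exprMn exprMn n1i.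
  rewrite -natrX -expnM muln2 -addnn -hn -/N => h3.
  by rewrite -{2}h3; field.
have : (2 ^ n * 2 = 4)%N.
  apply/eqP; rewrite -(eqr_nat algC) natrM -/N.
  apply/eqP; apply: (mulfI (x := N)); first by rewrite /N pnatr_eq0 expn_eq0.
  by rewrite mulrA -expr2 hN mulrC.
move/eqP; rewrite -expnSr (eqn_exp2l _ 2) //.
by move/eqP => h1; move: hn2; lia.
Qed.


End Proof.

Theorem corollary3 (n : nat) (F : finFieldType) (alpha : 'I_n -> F) :
  (2 <= n)%N -> ~~ odd n ->
  2%N \in [pchar F] -> #|F| = (2 ^ n)%N ->
  self_dual alpha ->
  is_bent n (@Qfun F n) /\ ~ is_negabent alpha (@Qfun F n).
Proof.
move=> hn2 hev ch cardF hsd.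
have n0 : (0 < n)%N by apply: leq_trans hn2.
pose i0 : 'I_n := Ordinal n0.
have hz1 : Trm n (alpha i0 * alpha i0) = 1 by rewrite hsd eqxx.
split.
  exact: (@bent_part F n ch cardF hev hn2 _ hz1).
exact: (@not_negabent F n ch cardF hev hn2 _ hz1 alpha hsd).
Qed.
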